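(* Let $\mathcal{X}\subset\mathbb{R}^n$ be convex and compact with $\mathbf{0}\in\mathcal{X}$ and diameter at most $D$ (i.e. $\|\mathbf{x}-\mathbf{y}\|_2\le D$ for all $\mathbf{x},\mathbf{y}\in\mathcal{X}$). Let $f_0,f_1,\dots,f_T:\mathcal{X}\to\mathbb{R}$ be convex differentiable functions and let $\eta\in(0,1]$. Let $\mathbf{x}_0\in\mathcal{X}$ and for $t\ge 0$ define $\mathbf{x}_t'\in\arg\min_{\mathbf{x}\in\mathcal{X}}\langle\nabla f_t(\mathbf{x}_t),\mathbf{x}\rangle$ and $\mathbf{x}_{t+1}=(1-\eta)\mathbf{x}_t+\eta\mathbf{x}_t'$. Then for any $\mathbf{v}_0,\mathbf{v}_1,\dots,\mathbf{v}_T\in\mathcal{X}$ and every $t\in\{1,\dots,T\}$, $$f_t(\mathbf{x}_t)-f_t(\mathbf{v}_t)\le f^{\sup}_{t,t-1}+(1-\eta)\big(f_{t-1}(\mathbf{x}_{t-1})-f_{t-1}(\mathbf{v}_{t-1})\big)+f_{t-1}(\mathbf{v}_{t-1})-f_t(\mathbf{v}_t)+\eta D\|\nabla f_t(\mathbf{x}_t)-\nabla f_{t-1}(\mathbf{x}_{t-1})\|_2,$$ where $f^{\sup}_{t,t-1}=\sup_{\mathbf{x}\in\mathcal{X}}|f_t(\mathbf{x})-f_{t-1}(\mathbf{x})|$.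
   Context: The iteration is the Online Frank-Wolfe (OFW) update with constant step size $\eta$. *)

(* Defs.v *)
From HB Require Import structures.
From mathcomp Require Import all_boot all_order all_algebra.
From mathcomp Require Import all_classical all_reals all_analysis.
Set Implicit Arguments. Unset Strict Implicit. Unset Printing Implicit Defensive.
Import Order.TTheory GRing.Theory Num.Theory.
Import numFieldNormedType.Exports.
Local Open Scope classical_set_scope.
Local Open Scope ring_scope.

Section Defs.
Variables (R : realType) (n : nat).

Definition dotp (u v : 'rV[R]_n) : R := \sum_(i < n) u ord0 i * v ord0 i.
Definition norm2 (u : 'rV[R]_n) : R := Num.sqrt (dotp u u).

Definition grad (f : 'rV[R]_n -> R) (x : 'rV[R]_n) : 'rV[R]_n :=
  \row_(i < n) ('d f x : 'rV[R]_n -> R) (delta_mx ord0 i).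

Definition convex_setE (X : set 'rV[R]_n) : Prop :=
  forall x y (l : R), X x -> X y -> 0 <= l <= 1 -> X ((1 - l) *: x + l *: y).

Definition convex_on (X : set 'rV[R]_n) (f : 'rV[R]_n -> R) : Prop :=
  forall x y (l : R), X x -> X y -> 0 <= l <= 1 ->
    f ((1 - l) *: x + l *: y) <= (1 - l) * f x + l * f y.

Definition fsup (X : set 'rV[R]_n) (g h : 'rV[R]_n -> R) : R :=
  sup [set `|g x - h x| | x in X].

End Defs.

(* Main.v *)
Require Import Defs.
From HB Require Import structures.
From mathcomp Require Import all_boot all_order all_algebra.
From mathcomp Require Import all_classical all_reals all_analysis.
From mathcomp Require Import ring lra.
Import Order.TTheory GRing.Theory Num.Theory.
Import numFieldNormedType.Exports.
Local Open Scope classical_set_scope.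
Local Open Scope ring_scope.

Lemma dgrad (R : realType) (n : nat) (f : 'rV[R]_n -> R) y w :
  'd f y w = dotp (grad f y) w.
Proof.
rewrite {1}(row_sum_delta w) linear_sum /dotp; apply: eq_bigr => i _.
by rewrite linearZ /= mxE mulrC.
Qed.

Lemma grad_ineq (R : realType) (n : nat) (X : set 'rV[R]_n) f y z :
  convex_setE X -> convex_on X f -> X y -> X z -> differentiable f y ->
  f y + dotp (grad f y) (z - y) <= f z.
Proof.
move=> cX cf Xy Xz df.
rewrite -dgrad -deriveE //.
have dv : derivable f y (z - y) := diff_derivable (v := z - y) df.
set g := (fun h : R => h^-1 *: ((f \o shift y) (h *: (z - y)) - f y)).
have : g @ 0^'+ --> 'D_(z - y) f y.
  have sub : (0:R)^'+ `=>` (0:R)^'.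
    move=> A; rewrite /at_right /dnbhs /within /=; apply: filterS => u Au u0.
    by apply: Au; rewrite gt_eqF.
  exact: cvg_trans (cvg_fmap2 sub) dv.
move=> /cvgr_to_le => /(_ (f z - f y)).
rewrite -lerBrDl; apply.
near=> h.
have h0 : 0 < h by near: h; exact: nbhs_right_gt.
have h1 : h <= 1 by near: h; exact: nbhs_right_le.
rewrite /g /= -[h^-1 *: _]/(h^-1 * _) ler_pdivrMl //.
have -> : h *: (z - y) + y = (1 - h) *: y + h *: z.
  by rewrite scalerBr scalerBl scale1r addrC addrCA addrC.
rewrite lerBlDr; apply: le_trans (cf _ _ _ Xy Xz _) _.
  by rewrite (ltW h0) h1.
by rewrite le_eqVlt; apply/orP; left; apply/eqP; ring.
Unshelve. all: by end_near.
Qed.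

Lemma dotp_ge0 (R : realType) (n : nat) (a : 'rV[R]_n) : 0 <= dotp a a.
Proof. by apply: sumr_ge0 => i _; rewrite -expr2 sqr_ge0. Qed.

Lemma dotp_eq0 (R : realType) (n : nat) (a b : 'rV[R]_n) :
  dotp a a = 0 -> dotp a b = 0.
Proof.
move=> /psumr_eq0P H; rewrite /dotp big1 // => i _.
have Hge : forall j : 'I_n, true -> 0 <= a ord0 j * a ord0 j.
  by move=> j _; rewrite -expr2 sqr_ge0.
move: (H Hge i isT) => /eqP; rewrite mulf_eq0 orbb => /eqP ->.
by rewrite mul0r.
Qed.

Lemma dotpC (R : realType) (n : nat) (a b : 'rV[R]_n) : dotp a b = dotp b a.
Proof. by apply: eq_bigr => i _; rewrite mulrC. Qed.

Lemma cauchy (R : realType) (n : nat) (a b : 'rV[R]_n) :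
  dotp a b <= norm2 a * norm2 b.
Proof.
set A := norm2 a; set B := norm2 b.
have A0 : 0 <= A by exact: sqrtr_ge0.
have B0 : 0 <= B by exact: sqrtr_ge0.
have AA : A ^+ 2 = dotp a a by rewrite sqr_sqrtr // dotp_ge0.
have BB : B ^+ 2 = dotp b b by rewrite sqr_sqrtr // dotp_ge0.
have E : \sum_(i < n) (a ord0 i * B - b ord0 i * A) ^+ 2 =
   B ^+ 2 * dotp a a - (2 * A * B) * dotp a b + A ^+ 2 * dotp b b.
  rewrite /dotp !mulr_sumr -sumrB -big_split /=; apply: eq_bigr => i _; ring.
have : 0 <= \sum_(i < n) (a ord0 i * B - b ord0 i * A) ^+ 2.
  by apply: sumr_ge0 => i _; exact: sqr_ge0.
rewrite E -AA -BB => H.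
have [A00|Ap] := eqVneq A 0.
  by rewrite dotp_eq0 ?A00 ?mul0r // -AA A00 expr0n.
have [B00|Bp] := eqVneq B 0.
  by rewrite dotpC dotp_eq0 ?B00 ?mulr0 // -BB B00 expr0n.
have ABp : 0 < A * B by rewrite mulr_gt0 // lt0r ?Ap ?Bp.
rewrite -(ler_pM2l ABp); nra.
Qed.

Lemma fsup_ge (R : realType) (n : nat) (X : set 'rV[R]_n) g h y :
  compact X -> (forall z, X z -> differentiable g z) ->
  (forall z, X z -> differentiable h z) -> X y ->
  `|g y - h y| <= fsup X g h.
Proof.
move=> cX dg dh Xy.
have [c Xc Hc] : exists2 c, c \in X & forall t, t \in X -> `|g t - h t| <= `|g c - h c|.
  apply: EVT_max_rV => //; first by exists y.
  apply: continuous_in_subspaceT => z /set_mem Xz.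
  apply: (continuous_comp (f := fun t => g t - h t) (g := Num.norm)); last exact: norm_continuous.
  have cg := differentiable_continuous (dg z Xz).
  have ch := differentiable_continuous (dh z Xz).
  exact: (cvgB cg ch).
have Hub : has_ubound [set `|g x - h x| | x in X].
  by exists `|g c - h c| => _ [z Xz <-]; apply: Hc; exact/mem_set.
apply: (ub_le_sup Hub); by exists y.
Qed.

Lemma dotpBr (R : realType) (n : nat) (u v w : 'rV[R]_n) :
  dotp u (v - w) = dotp u v - dotp u w.
Proof. by rewrite /dotp -sumrB; apply: eq_bigr => i _; rewrite !mxE; ring. Qed.

Lemma dotpBl (R : realType) (n : nat) (u u' v : 'rV[R]_n) :
  dotp (u - u') v = dotp u v - dotp u' v.
Proof. by rewrite /dotp -sumrB; apply: eq_bigr => i _; rewrite !mxE; ring. Qed.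

Lemma dotp_step (R : realType) (n : nat) (g a b : 'rV[R]_n) (e : R) :
  dotp g (a - ((1 - e) *: a + e *: b)) = e * (dotp g a - dotp g b).
Proof.
by rewrite /dotp -sumrB mulr_sumr; apply: eq_bigr => i _; rewrite !mxE; ring.
Qed.

Lemma arith (R : realFieldType) (e a b c d w S N Dn D p1 p2 q1 q2 q3 r1 r2 : R) :
  0 < e -> a + e * (p1 - p2) <= b -> q2 <= q3 -> c + (q3 - q1) <= d ->
  r1 - r2 <= N * Dn -> r1 = p2 - p1 -> r2 = q2 - q1 -> N * Dn <= N * D ->
  b - c <= S ->
  a - w <= S + (1 - e) * (c - d) + (d - w) + e * D * N.
Proof.
move=> e0 Ha Hb1 Hb2 Hc E1 E2 HND Hf.
have H : p2 - p1 <= d - c + N * D by lra.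
have := ler_wpM2l (ltW e0) H.
nra.
Qed.

Theorem lemma1 (R : realType) (n : nat) (X : set 'rV[R]_n) (D : R)
  (T : nat) (f : nat -> 'rV[R]_n -> R) (eta : R)
  (x x' v : nat -> 'rV[R]_n) :
  convex_setE X -> compact X -> X 0 ->
  (forall y z, X y -> X z -> norm2 (y - z) <= D) ->
  (forall t, (t <= T)%N -> convex_on X (f t)) ->
  (forall t, (t <= T)%N -> forall y, X y -> differentiable (f t) y) ->
  0 < eta <= 1 ->
  X (x 0%N) ->
  (forall t, (t <= T)%N -> X (x' t) /\
     forall y, X y -> dotp (grad (f t) (x t)) (x' t) <= dotp (grad (f t) (x t)) y) ->
  (forall t, x t.+1 = (1 - eta) *: x t + eta *: x' t) ->
  (forall t, (t <= T)%N -> X (v t)) ->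
  forall t, (1 <= t <= T)%N ->
    f t (x t) - f t (v t) <=
      fsup X (f t) (f t.-1)
      + (1 - eta) * (f t.-1 (x t.-1) - f t.-1 (v t.-1))
      + (f t.-1 (v t.-1) - f t (v t))
      + eta * D * norm2 (grad (f t) (x t) - grad (f t.-1) (x t.-1)).
Proof.
move=> cX cpX X0 Dd cf df /andP[e0 e1] Xx0 opt xdef Xv t /andP[t1 tT].
have Xx : forall s, (s <= T)%N -> X (x s).
  elim=> [//|s IH] sT.
  rewrite xdef; apply: cX; first exact: IH (ltnW sT).
    exact: (opt s (ltnW sT)).1.
  by rewrite (ltW e0) e1.
case: t t1 tT => [//|s] _ sT /=.
have sT' : (s <= T)%N := ltnW sT.
set gt := grad (f s.+1) (x s.+1); set gs := grad (f s) (x s).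
have [Xx's optS] := opt s sT'.
have Ha := @grad_ineq _ _ _ _ _ _ cX (cf _ sT) (Xx _ sT) (Xx _ sT') (df _ sT _ (Xx _ sT)).
rewrite -/gt {2}xdef dotp_step in Ha.
have Hb1 : dotp gs (x' s) <= dotp gs (v s) := optS _ (Xv _ sT').
have Hb2 := @grad_ineq _ _ _ _ _ _ cX (cf _ sT') (Xx _ sT') (Xv _ sT') (df _ sT' _ (Xx _ sT')).
rewrite -/gs dotpBr in Hb2.
have Hc : dotp gt (x' s - x s) - dotp gs (x' s - x s) <= norm2 (gt - gs) * norm2 (x' s - x s).
  by rewrite -dotpBl; exact: cauchy.
have E1 := @dotpBr _ _ gt (x' s) (x s).
have E2 := @dotpBr _ _ gs (x' s) (x s).
have HN : 0 <= norm2 (gt - gs) by exact: sqrtr_ge0.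
have HD := Dd _ _ Xx's (Xx _ sT').
have HND := ler_wpM2l HN HD.
have Hf := @fsup_ge _ _ _ (f s.+1) (f s) _ cpX (df _ sT) (df _ sT') (Xx _ sT').
have Hf' := le_trans (ler_norm _) Hf.
apply: (@arith R eta); [exact: e0|exact: Ha|exact: Hb1|exact: Hb2|exact: Hc|exact: E1|exact: E2|exact: HND|exact: Hf'].
Qed.
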